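(* Let $\Sigma$ be an alphabet, $(\mathcal{O},d)$ a pseudometric space, $\epsilon\ge 0$, and let $T=(S,i,\Delta,\omega)$ and $T'=(S',i',\Delta',\omega')$ be transition systems with observations. The following are equivalent: (1) $T$ and $T'$ are $\epsilon$-open bisimilar, i.e. there exist a transition system with observations $T''$, reals $\epsilon_1,\epsilon_2\ge0$ with $\epsilon_1+\epsilon_2=\epsilon$, an $\epsilon_1$-bounded $\mathbf{Lin}_{\Sigma}\mathcal{O}$-open morphism $T''\to T$ and an $\epsilon_2$-bounded $\mathbf{Lin}_{\Sigma}\mathcal{O}$-open morphism $T''\to T'$; (2) there is an $\epsilon$-approximate bisimulation between $T$ and $T'$, i.e. a strong bisimulation $R\subseteq S\times S'$ between $(S,i,\Delta)$ and $(S',i',\Delta')$ such that $d(\omega(s),\omega'(s'))\le\epsilon$ for all $(s,s')\in R$; (3) there exist a transition system with observations $T''$, a $0$-bounded $\mathbf{Lin}_{\Sigma}\mathcal{O}$-open morphism $T''\to T$ and an $\epsilon$-bounded $\mathbf{Lin}_{\Sigma}\mathcal{O}$-open morphism $T''\to T'$.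
   Context: A (labelled) transition system over $\Sigma$ is a triple $(S,i,\Delta)$ with $i\in S$ and $\Delta\subseteq S\times\Sigma\times S$; a morphism is a function on states preserving the initial state and transitions. A strong bisimulation between $(S,i,\Delta)$ and $(S',i',\Delta')$ is a relation $R\subseteq S\times S'$ with $(i,i')\in R$ such that whenever $(s,s')\in R$: for every $(s,a,t)\in\Delta$ there is $(s',a,t')\in\Delta'$ with $(t,t')\in R$, and for every $(s',a,t')\in\Delta'$ there is $(s,a,t)\in\Delta$ with $(t,t')\in R$. A transition system with observations is $(S,i,\Delta,\omega)$ with $(S,i,\Delta)$ a transition system and $\omega:S\to\mathcal{O}$. An $\epsilon$-bounded morphism $(S,i,\Delta,\omega)\to(S',i',\Delta',\omega')$ is a transition system morphism $f$ with $d(\omega(s),\omega'(f(s)))\le\epsilon$ for all $s$; bounded means $\epsilon$-bounded for some $\epsilon\ge0$; these form the category $\mathbf{TS}_{\Sigma}\mathcal{O}$. For $w=a_1\cdots a_n\in\Sigma^*$, $L(w)$ is the transition system with states $0,\dots,n$, initial state $0$, transitions $(j-1,a_j,j)$. $\mathbf{Lin}_{\Sigma}\mathcal{O}$ is the full subcategory of $\mathbf{TS}_{\Sigma}\mathcal{O}$ of systems whose underlying transition system is some $L(w)$. A morphism $f:X\to Y$ of a category $\mathcal{M}$ is $\mathcal{P}$-open (for a subcategory $\mathcal{P}$) if for every $e:P\to P'$ in $\mathcal{P}$ and $p:P\to X$, $q':P'\to Y$ with $f\circ p=q'\circ e$, there is $q:P'\to X$ with $q\circ e=p$ and $f\circ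 q=q'$. *)

(* Defs.v *)
From Stdlib Require Import Reals List.
Open Scope R_scope.
Set Implicit Arguments.

Definition is_pseudometric (O : Type) (d : O -> O -> R) : Prop :=
  (forall x, d x x = 0) /\ (forall x y, d x y = d y x) /\
  (forall x y z, d x z <= d x y + d y z).

Record TSO (Sig O : Type) := mkTSO {
  st : Type;
  init : st;
  trans : st -> Sig -> st -> Prop;
  obs : st -> O }.
Arguments st {Sig O}.
Arguments init {Sig O}.
Arguments trans {Sig O}.
Arguments obs {Sig O}.

Section Defs.
Variables (Sig O : Type) (d : O -> O -> R).

Definition ts_morph (T T' : TSO Sig O) (f : st T -> st T') : Prop :=
  f (init T) = init T' /\
  (forall s a t, trans T s a t -> trans T' (f s) a (f t)).

Definition eps_bounded (eps : R) (T T' : TSO Sig O) (f : st T -> st T') : Prop :=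
  ts_morph T T' f /\ forall s, d (obs T s) (obs T' (f s)) <= eps.

Definition bounded_morph (T T' : TSO Sig O) (f : st T -> st T') : Prop :=
  exists eps, 0 <= eps /\ eps_bounded eps T T' f.

Definition lin_st (w : list Sig) : Type := { j : nat | (j <= length w)%nat }.

Definition lin_init (w : list Sig) : lin_st w :=
  exist _ 0%nat (Nat.le_0_l (length w)).

Definition lin_trans (w : list Sig) (x : lin_st w) (a : Sig) (y : lin_st w) : Prop :=
  proj1_sig y = S (proj1_sig x) /\ nth_error w (proj1_sig x) = Some a.

Definition linTSO (w : list Sig) (om : lin_st w -> O) : TSO Sig O :=
  @mkTSO Sig O (lin_st w) (lin_init w) (@lin_trans w) om.

Definition lin_open (T T' : TSO Sig O) (f : st T -> st T') : Prop :=
  forall (w : list Sig) (om : lin_st w -> O) (w' : list Sig) (om' : lin_st w' -> O)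
         (e : lin_st w -> lin_st w') (p : lin_st w -> st T) (q' : lin_st w' -> st T'),
    bounded_morph (linTSO om) (linTSO om') e ->
    bounded_morph (linTSO om) T p ->
    bounded_morph (linTSO om') T' q' ->
    (forall x, f (p x) = q' (e x)) ->
    exists q : lin_st w' -> st T,
      bounded_morph (linTSO om') T q /\
      (forall x, q (e x) = p x) /\
      (forall x, f (q x) = q' x).

Definition strong_bisim (T T' : TSO Sig O) (Rel : st T -> st T' -> Prop) : Prop :=
  Rel (init T) (init T') /\
  forall s s', Rel s s' ->
    (forall a t, trans T s a t -> exists t', trans T' s' a t' /\ Rel t t') /\
    (forall a t', trans T' s' a t' -> exists t, trans T s a t /\ Rel t t').

Definition approx_bisim (eps : R) (T T' : TSO Sig O) : Prop :=
  exists Rel : st T -> st T' -> Prop,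
    strong_bisim T T' Rel /\ forall s s', Rel s s' -> d (obs T s) (obs T' s') <= eps.

Definition eps_open_bisimilar (eps : R) (T T' : TSO Sig O) : Prop :=
  exists (T'' : TSO Sig O) (eps1 eps2 : R) (f : st T'' -> st T) (g : st T'' -> st T'),
    0 <= eps1 /\ 0 <= eps2 /\ eps1 + eps2 = eps /\
    eps_bounded eps1 T'' T f /\ lin_open T'' T f /\
    eps_bounded eps2 T'' T' g /\ lin_open T'' T' g.

Definition zero_eps_open_span (eps : R) (T T' : TSO Sig O) : Prop :=
  exists (T'' : TSO Sig O) (f : st T'' -> st T) (g : st T'' -> st T'),
    eps_bounded 0 T'' T f /\ lin_open T'' T f /\
    eps_bounded eps T'' T' g /\ lin_open T'' T' g.

End Defs.

(* Main.v *)
Require Import Defs.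
From Stdlib Require Import Reals.
From Stdlib Require Import Lia Lra List Arith Classical ClassicalEpsilon.
Open Scope R_scope.
Set Implicit Arguments. Unset Strict Implicit.

Section Pf.
Variables (Sig O : Type) (d : O -> O -> R).

Lemma bound_nat (G : nat -> R) N : exists M, 0 <= M /\ forall n, (n <= N)%nat -> G n <= M.
Proof.
  induction N.
  - exists (Rmax 0 (G 0%nat)). split; [apply Rmax_l|].
    intros n Hn; assert (n=0)%nat by lia; subst; apply Rmax_r.
  - destruct IHN as [M [HM H]]. exists (Rmax M (G (S N))). split.
    + eapply Rle_trans; [exact HM| apply Rmax_l].
    + intros n Hn. destruct (Nat.eq_dec n (S N)).
      * subst; apply Rmax_r.
      * eapply Rle_trans; [apply H; lia | apply Rmax_l].
Qed.

Definition toLin (w : list Sig) (n : nat) : lin_st w :=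
  match Compare_dec.le_dec n (length w) with left h => exist _ n h | right _ => lin_init w end.

Lemma toLin_proj (w : list Sig) (x : lin_st w) : toLin w (proj1_sig x) = x.
Proof.
  destruct x as [n h]; unfold toLin; simpl; destruct (Compare_dec.le_dec n (length w)).
  - f_equal; apply proof_irrelevance.
  - contradiction.
Qed.

Lemma toLin_val (w : list Sig) n : (n <= length w)%nat -> proj1_sig (toLin w n) = n.
Proof. intros; unfold toLin; destruct Compare_dec.le_dec; simpl; auto; contradiction. Qed.

Lemma lin_eq (w : list Sig) (x y : lin_st w) : proj1_sig x = proj1_sig y -> x = y.
Proof.
  destruct x, y; simpl; intros; subst; f_equal; apply proof_irrelevance.
Qed.

Lemma fin_bound (w : list Sig) (F : lin_st w -> R) : exists M, 0<=M /\ forall x, F x <= M.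
Proof.
  destruct (bound_nat (fun n => F (toLin w n)) (length w)) as [M [HM H]].
  exists M; split; auto. intros x. rewrite <- (toLin_proj x). apply H.
  apply (proj2_sig x).
Qed.

Lemma morph_bounded (w : list Sig) (om : lin_st w -> O) (T : TSO Sig O) h :
  ts_morph (linTSO om) T h -> bounded_morph d (linTSO om) T h.
Proof.
  intro H. destruct (fin_bound (fun x => d (om x) (obs T (h x)))) as [M [HM HB]].
  exists M; split; auto; split; auto.
Qed.

Lemma lin_morph_val (w w' : list Sig) (om : lin_st w -> O) (om' : lin_st w' -> O) (e : lin_st w -> lin_st w') :
  ts_morph (linTSO om) (linTSO om') e ->
  (forall x, proj1_sig (e x) = proj1_sig x) /\
  (forall j a, nth_error w j = Some a -> nth_error w' j = Some a).
Proof.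
  intros [H0 Ht].
  assert (Hv: forall n x, proj1_sig x = n -> proj1_sig (e x) = n).
  { induction n; intros x Hx.
    - assert (x = lin_init w) by (apply lin_eq; auto). subst x. simpl in H0.
      rewrite H0. reflexivity.
    - assert (n < length w)%nat by (destruct x as [m hm]; simpl in Hx; lia).
      destruct (nth_error w n) eqn:E.
      2:{ apply nth_error_None in E; lia. }
      assert (Hl : lin_trans (toLin w n) s x).
      { unfold lin_trans; rewrite toLin_val by lia; split; auto. }
      destruct (Ht _ _ _ Hl) as [H1 _]. rewrite H1, (IHn (toLin w n)); auto.
      apply toLin_val; lia. }
  split.
  - intros; eapply Hv; eauto.
  - intros j a Hj.
    assert (j < length w)%nat by (apply nth_error_Some; congruence).
    assert (Hl : lin_trans (toLin w j) a (toLin w (S j))).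
    { unfold lin_trans; rewrite !toLin_val by lia; split; auto. }
    destruct (Ht _ _ _ Hl) as [_ H2].
    rewrite (Hv j) in H2; auto. apply toLin_val; lia.
Qed.

Section Lift.
Variables (U V : TSO Sig O) (h : st U -> st V).
Hypothesis Hl : forall u a v', trans V (h u) a v' -> exists u', trans U u a u' /\ h u' = v'.
Variables (w w' : list Sig) (om : lin_st w -> O) (om' : lin_st w' -> O)
  (e : lin_st w -> lin_st w') (p : lin_st w -> st U) (q' : lin_st w' -> st V).
Hypothesis He : ts_morph (linTSO om) (linTSO om') e.
Hypothesis Hp : ts_morph (linTSO om) U p.
Hypothesis Hq : ts_morph (linTSO om') V q'.
Hypothesis Hc : forall x, h (p x) = q' (e x).

Definition stepf (u : st U) a v' : st U :=
  epsilon (inhabits u) (fun u' => trans U u a u' /\ h u' = v').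

Fixpoint Qf (n : nat) : st U :=
  match n with
  | 0%nat => p (toLin w 0)
  | S m => if Compare_dec.le_dec (S m) (length w) then p (toLin w (S m)) else
      match nth_error w' m with
      | Some a => stepf (Qf m) a (q' (toLin w' (S m)))
      | None => Qf m end
  end.

Lemma Q_S m : Qf (S m) = if Compare_dec.le_dec (S m) (length w) then p (toLin w (S m)) else
      match nth_error w' m with
      | Some a => stepf (Qf m) a (q' (toLin w' (S m)))
      | None => Qf m end.
Proof. reflexivity. Qed.

Lemma Q_low n : (n <= length w)%nat -> Qf n = p (toLin w n).
Proof. destruct n; intros; auto. rewrite Q_S; destruct Compare_dec.le_dec; auto; contradiction. Qed.

Lemma e_toLin n : (n <= length w)%nat -> (n <= length w')%nat -> e (toLin w n) = toLin w' n.
Proof.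
  intros. apply lin_eq. destruct (lin_morph_val He) as [Hev _].
  rewrite Hev, !toLin_val; auto.
Qed.

Lemma step_spec n a : (S n <= length w')%nat -> nth_error w' n = Some a ->
  h (Qf n) = q' (toLin w' n) ->
  trans U (Qf n) a (stepf (Qf n) a (q' (toLin w' (S n)))) /\
  h (stepf (Qf n) a (q' (toLin w' (S n)))) = q' (toLin w' (S n)).
Proof.
  intros H1 H2 IH.
  assert (Hl' : lin_trans (toLin w' n) a (toLin w' (S n))).
  { unfold lin_trans; rewrite !toLin_val by lia; split; auto. }
  pose proof (proj2 Hq _ _ _ Hl') as Ht. rewrite <- IH in Ht.
  destruct (Hl Ht) as [u' Hu'].
  unfold stepf.
  exact (epsilon_spec (inhabits (Qf n)) (fun u' => trans U (Qf n) a u' /\ h u' = q' (toLin w' (S n))) (ex_intro _ u' Hu')).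
Qed.

Lemma Q_inv n : (n <= length w')%nat -> h (Qf n) = q' (toLin w' n).
Proof.
  induction n; intros Hn.
  - simpl. rewrite Hc, e_toLin; auto; lia.
  - rewrite Q_S. destruct Compare_dec.le_dec.
    + rewrite Hc, e_toLin; auto.
    + destruct (nth_error w' n) eqn:E.
      2:{ apply nth_error_None in E; lia. }
      apply step_spec; auto. apply IHn; lia.
Qed.

Lemma Q_trans n a : (S n <= length w')%nat -> nth_error w' n = Some a -> trans U (Qf n) a (Qf (S n)).
Proof.
  intros H1 H2. rewrite Q_S. destruct Compare_dec.le_dec.
  - destruct (nth_error w n) eqn:E.
    2:{ apply nth_error_None in E; lia. }
    destruct (lin_morph_val He) as [_ Hpre].
    rewrite (Hpre _ _ E) in H2. injection H2 as <-.
    rewrite Q_low by lia.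
    assert (Hl' : lin_trans (toLin w n) s (toLin w (S n)))
      by (unfold lin_trans; rewrite !toLin_val by lia; split; auto).
    exact (proj2 Hp _ _ _ Hl').
  - rewrite H2. apply step_spec; auto. apply Q_inv; lia.
Qed.

Lemma lift_concl : exists q : lin_st w' -> st U,
      bounded_morph d (linTSO om') U q /\
      (forall x, q (e x) = p x) /\
      (forall x, h (q x) = q' x).
Proof.
  exists (fun x => Qf (proj1_sig x)).
  destruct (lin_morph_val He) as [Hev _].
  split; [|split].
  - apply morph_bounded. split.
    + simpl. replace (toLin w 0) with (lin_init w) by (apply lin_eq; rewrite toLin_val; simpl; auto; lia).
      exact (proj1 Hp).
    + intros s a t [H1 H2]. simpl. rewrite H1. apply Q_trans; auto.
      rewrite <- H1; apply (proj2_sig t).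
  - intros x. rewrite Hev, Q_low by apply (proj2_sig x). rewrite toLin_proj; auto.
  - intros x. rewrite Q_inv by apply (proj2_sig x). rewrite toLin_proj; auto.
Qed.
End Lift.

Lemma lift_open (U V : TSO Sig O) (h : st U -> st V) :
  (forall u a v', trans V (h u) a v' -> exists u', trans U u a u' /\ h u' = v') ->
  lin_open d U V h.
Proof.
  intros Hl w om w' om' e p q' He Hp Hq Hc.
  destruct He as [? [_ [He _]]]. destruct Hp as [? [_ [Hp _]]].
  destruct Hq as [? [_ [Hq _]]].
  eapply lift_concl; eauto.
Qed.

Definition reach (T'' : TSO Sig O) (u : st T'') : Prop :=
  exists w (om : lin_st w -> O) (p : lin_st w -> st T''),
    ts_morph (linTSO om) T'' p /\ p (toLin w (length w)) = u.

Lemma reach_init (T'' : TSO Sig O) : reach (init T'').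
Proof.
  exists nil, (fun _ => obs T'' (init T'')), (fun _ => init T''). split; auto.
  split; auto. intros [n ?] a t [_ H]. simpl in H. destruct n; discriminate.
Qed.

Lemma open_step (T'' T : TSO Sig O) f : ts_morph T'' T f -> lin_open d T'' T f ->
  forall u, reach u -> forall a t, trans T (f u) a t ->
  exists u', trans T'' u a u' /\ f u' = t /\ reach u'.
Proof.
  intros Hf Ho u [w [om [p [Hp Hu]]]] a t Ht.
  set (w' := w ++ a :: nil).
  assert (Hlen : length w' = S (length w)) by (unfold w'; rewrite length_app; simpl; lia).
  assert (Hw1 : forall j, (j < length w)%nat -> nth_error w' j = nth_error w j)
    by (intros; unfold w'; apply nth_error_app1; auto).
  assert (Hw2 : nth_error w' (length w) = Some a)
    by (unfold w'; rewrite nth_error_app2, Nat.sub_diag by lia; reflexivity).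
  set (e := fun x : lin_st w => toLin w' (proj1_sig x)).
  assert (Hve : forall x, proj1_sig (e x) = proj1_sig x).
  { intros x; unfold e; apply toLin_val. pose proof (proj2_sig x); simpl in *; lia. }
  set (q' := fun x : lin_st w' => if Compare_dec.le_dec (proj1_sig x) (length w)
               then f (p (toLin w (proj1_sig x))) else t).
  set (om' := fun _ : lin_st w' => om (lin_init w)).
  assert (He : ts_morph (linTSO om) (linTSO om') e).
  { split.
    - apply lin_eq. rewrite Hve. reflexivity.
    - intros s b t0 [H1 H2]. split.
      + rewrite !Hve; auto.
      + simpl. rewrite Hve. rewrite Hw1; auto.
        apply nth_error_Some; congruence. }
  assert (Hq : ts_morph (linTSO om') T q').
  { split.
    - simpl. unfold q'. simpl. destruct (Compare_dec.le_dec 0 (length w)); [|lia].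
      replace (toLin w 0) with (lin_init w) by (apply lin_eq; rewrite toLin_val; simpl; auto; lia).
      pose proof (proj1 Hp) as E0; simpl in E0; rewrite E0. exact (proj1 Hf).
    - intros s b t0 [H1 H2]. simpl in *.
      assert (Hs : (proj1_sig s <= length w)%nat) by (pose proof (proj2_sig t0); simpl in *; lia).
      unfold q'. rewrite H1. destruct (Compare_dec.le_dec (proj1_sig s) (length w)); [|lia].
      destruct (Compare_dec.le_dec (S (proj1_sig s)) (length w)).
      + rewrite Hw1 in H2 by lia.
        apply (proj2 Hf).
        assert (Hl' : lin_trans (toLin w (proj1_sig s)) b (toLin w (S (proj1_sig s))))
          by (unfold lin_trans; rewrite !toLin_val by lia; split; auto).
        exact (proj2 Hp _ _ _ Hl').
      + assert (Es : proj1_sig s = length w) by lia.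
        rewrite Es, Hw2 in H2. injection H2 as <-. rewrite Es, Hu. exact Ht. }
  assert (Hc : forall x, f (p x) = q' (e x)).
  { intros x. unfold q'. rewrite Hve. destruct Compare_dec.le_dec.
    - rewrite toLin_proj; auto.
    - exfalso; apply n; apply (proj2_sig x). }
  destruct (Ho w om w' om' e p q' (morph_bounded He) (morph_bounded Hp) (morph_bounded Hq) Hc)
    as [q [[? [_ [Hqm _]]] [Hqe Hqf]]].
  exists (q (toLin w' (length w'))). split; [|split].
  - rewrite <- Hu. rewrite <- Hqe.
    replace (e (toLin w (length w))) with (toLin w' (length w))
      by (apply lin_eq; rewrite Hve, !toLin_val; lia).
    assert (Hl' : lin_trans (toLin w' (length w)) a (toLin w' (length w'))).
    { unfold lin_trans; rewrite !toLin_val by lia. split; [lia|].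
      exact Hw2. }
    exact (proj2 Hqm _ _ _ Hl').
  - rewrite Hqf. unfold q'. rewrite toLin_val by lia. destruct Compare_dec.le_dec; auto; lia.
  - exists w', om', q. auto.
Qed.

End Pf.
Unset Implicit Arguments.

Theorem proposition3 (Sig O : Type) (d : O -> O -> R) (Hd : is_pseudometric d)
  (eps : R) (Heps : 0 <= eps) (T T' : TSO Sig O) :
  (eps_open_bisimilar d eps T T' <-> approx_bisim d eps T T') /\
  (approx_bisim d eps T T' <-> zero_eps_open_span d eps T T').
Proof.
  destruct Hd as [Hd0 [Hsym Htri]].
  assert (H23 : approx_bisim d eps T T' -> zero_eps_open_span d eps T T').
  { intros [Rel [[Hi Hb] Ho]].
    set (T'' := @mkTSO Sig O {x : st T * st T' | Rel (fst x) (snd x)}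
                  (exist _ (init T, init T') Hi)
                  (fun x a y => trans T (fst (proj1_sig x)) a (fst (proj1_sig y)) /\
                                trans T' (snd (proj1_sig x)) a (snd (proj1_sig y)))
                  (fun x => obs T (fst (proj1_sig x)))).
    exists T'', (fun x : st T'' => fst (proj1_sig x)), (fun x : st T'' => snd (proj1_sig x)).
    split; [|split; [|split]].
    - split; [split|].
      + reflexivity.
      + intros s a t [H _]; exact H.
      + intros s; simpl; rewrite Hd0; apply Rle_refl.
    - apply lift_open. intros [[s s'] Hr] a t Ht. simpl in Ht.
      destruct (proj1 (Hb s s' Hr) a t Ht) as [t' [Ht' Hr']].
      exists (exist _ (t, t') Hr'). simpl; auto.
    - split; [split|].
      + reflexivity.
      + intros s a t [_ H]; exact H.
      + intros [[s s'] Hr]; simpl. apply Ho; auto.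
    - apply lift_open. intros [[s s'] Hr] a t' Ht. simpl in Ht.
      destruct (proj2 (Hb s s' Hr) a t' Ht) as [t [Ht0 Hr']].
      exists (exist _ (t, t') Hr'). simpl; auto. }
  assert (H31 : zero_eps_open_span d eps T T' -> eps_open_bisimilar d eps T T').
  { intros [T'' [f [g [H1 [H2 [H3 H4]]]]]].
    exists T'', 0, eps, f, g. repeat split; auto; try lra; try apply H1; try apply H3. }
  assert (H12 : eps_open_bisimilar d eps T T' -> approx_bisim d eps T T').
  { intros [T'' [e1 [e2 [f [g [H1 [H2 [H3 [[Hfm Hfb] [Hfo [[Hgm Hgb] Hgo]]]]]]]]]]].
    exists (fun s s' => exists u, reach u /\ f u = s /\ g u = s'). split.
    - split.
      + exists (init T''). split; [apply reach_init|]. split; [apply Hfm|apply Hgm].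
      + intros s s' [u [Hr [<- <-]]]. split.
        * intros a t Ht. destruct (open_step Hfm Hfo Hr Ht) as [u' [Htu [Hfu Hr']]].
          exists (g u'); split; [apply (proj2 Hgm); auto|]. exists u'; auto.
        * intros a t Ht. destruct (open_step Hgm Hgo Hr Ht) as [u' [Htu [Hfu Hr']]].
          exists (f u'); split; [apply (proj2 Hfm); auto|]. exists u'; auto.
    - intros s s' [u [_ [<- <-]]].
      eapply Rle_trans; [apply (Htri _ (obs T'' u) _)|].
      rewrite (Hsym (obs T (f u))). rewrite <- H3. apply Rplus_le_compat; auto. }
  tauto.
Qed.
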